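(* Let $(r,\ell)$ be a $\mathcal C^1$ solution of system (D) on $[0,t_* )\times\mathbb R$. Then for all $t\in[0,t_* )$ and $\alpha,\beta\in\mathbb R$, $$c_1(t,\alpha)=\sqrt{\frac{k\big(r_0(\alpha)-\ell(t,x_1(t,\alpha))\big)}{k(2r_0(\alpha))}}\Big\{1+r_0'(\alpha)\sqrt{k(2r_0(\alpha))}\int_0^t f\big(r_0(\alpha)-\ell(\tau,x_1(\tau,\alpha))\big)\,d\tau\Big\},$$ $$c_2(t,\beta)=\sqrt{\frac{k\big(r(t,x_2(t,\beta))-\ell_0(\beta)\big)}{k(2r_0(\beta))}}\Big\{1+\ell_0'(\beta)\sqrt{k(2r_0(\beta))}\int_0^t f\big(r(\tau,x_2(\tau,\beta))-\ell_0(\beta)\big)\,d\tau\Big\}.$$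
   Context: Let $Q(\xi):=\sqrt{1+\xi^2}$, $L(u):=\tfrac12(u\sqrt{1+u^2}+\operatorname{arcsinh}u)$ (so $L'=Q$, $L$ an odd increasing bijection of $\mathbb R$), and $k(\eta):=Q(L^{-1}(-\eta/2))$, so $k$ is even, smooth, $k\ge k(0)=1$. Set $f(\eta):=k'(\eta)/\sqrt{k(\eta)}$. Given $w_0\in\mathcal C^2(\mathbb R)$ with $w_0'$ bounded and non-constant, let $r_0:=-L(w_0')$ and $\ell_0:=L(w_0')=-r_0$. System (D) is: $r_{,t}+k(r-\ell)r_{,x}=0$, $\ell_{,t}-k(r-\ell)\ell_{,x}=0$ on $[0,t_* )\times\mathbb R$, $r(0,\cdot)=r_0$, $\ell(0,\cdot)=\ell_0$, where $[0,t_* )$ is the maximal interval of existence of the $\mathcal C^1$ solution. Forward characteristics $x_1(t,\alpha)$ solve $\partial_t x_1=k\big((r-\ell)(t,x_1)\big)$, $x_1(0,\alpha)=\alpha$; backward characteristics $x_2(t,\beta)$ solve $\partial_tx_2=-k\big((r-\ell)(t,x_2)\big)$, $x_2(0,\beta)=\beta$. Along them $r(t,x_1(t,\alpha))=r_0(\alpha)$ and $\ell(t,x_2(t,\beta))=\ell_0(\beta)$. The infinitesimal compression ratios are $c_1(t,\alpha):=\partial x_1/\partial\alpha$ and $c_2(t,\beta):=\partial x_2/\partial\beta$. *)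

(* Defs.v *)
From Stdlib Require Import Reals Lra ClassicalEpsilon.
From Coquelicot Require Import Coquelicot.
Open Scope R_scope.

Definition Q (xi : R) : R := sqrt (1 + xi ^ 2).

Definition L (u : R) : R := (u * sqrt (1 + u ^ 2) + arcsinh u) / 2.

(* L^{-1}: the (unique, since L is an increasing bijection of R) y with L y = z *)
Definition Linv (z : R) : R := epsilon (inhabits 0) (fun y => L y = z).

Definition k (eta : R) : R := Q (Linv (- eta / 2)).

Definition fk (eta : R) : R := Derive k eta / sqrt (k eta).

Definition in_time (T : Rbar) (t : R) : Prop := 0 <= t /\ Rbar_lt t T.

Definition in_strip (T : Rbar) (p : R * R) : Prop := in_time T (fst p).

(* derivative of g at t relative to the set D (one-sided at endpoints) *)
Definition is_derive_within (D : R -> Prop) (g : R -> R) (t l : R) : Prop :=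
  filterlim (fun s => (g s - g t) / (s - t))
    (within (fun s => s <> t /\ D s) (locally t)) (locally l).

Definition continuous_within2 (S : R * R -> Prop) (v : R * R -> R) (p : R * R) : Prop :=
  filterlim v (within S (locally p)) (locally (v p)).

Definition C1_strip (T : Rbar) (u ut ux : R -> R -> R) : Prop :=
  forall t x, in_time T t ->
    is_derive_within (in_time T) (fun s => u s x) t (ut t x) /\
    is_derive (fun y => u t y) x (ux t x) /\
    continuous_within2 (in_strip T) (fun p => ut (fst p) (snd p)) (t, x) /\
    continuous_within2 (in_strip T) (fun p => ux (fst p) (snd p)) (t, x).

Definition C2 (w : R -> R) : Prop :=
  (forall x, ex_derive w x) /\ (forall x, ex_derive (Derive w) x) /\
  (forall x, continuous (Derive (Derive w)) x).

Definition r0_of (w0 : R -> R) (x : R) : R := - L (Derive w0 x).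
Definition l0_of (w0 : R -> R) (x : R) : R := L (Derive w0 x).

(* Main.v *)
Require Import Defs.
From Stdlib Require Import Reals Lra ClassicalEpsilon Classical.
From Coquelicot Require Import Coquelicot.
Open Scope R_scope.


Definition DW (T : Rbar) (g : R -> R) (t l : R) : Prop :=
  forall eps, 0 < eps -> exists d, 0 < d /\ forall s, in_time T s -> s <> t ->
    Rabs (s - t) < d -> Rabs ((g s - g t) / (s - t) - l) < eps.

Definition CT (T : Rbar) (g : R -> R) (t : R) : Prop :=
  forall eps, 0 < eps -> exists d, 0 < d /\ forall s, in_time T s ->
    Rabs (s - t) < d -> Rabs (g s - g t) < eps.

Definition CW (T : Rbar) (v : R -> R -> R) (t x : R) : Prop :=
  forall eps, 0 < eps -> exists d, 0 < d /\ forall s y, in_time T s ->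
    Rabs (s - t) < d -> Rabs (y - x) < d -> Rabs (v s y - v t x) < eps.

Lemma DW_of (T : Rbar) (g : R -> R) (t l : R) : is_derive_within (in_time T) g t l -> DW T g t l.
Proof.
  intros H eps He.
  assert (HP := H (ball l (mkposreal eps He)) (locally_ball _ _)).
  destruct HP as [[d Hd] Hd'].
  exists d; split; [exact Hd|].
  intros s Hs Hst Hsd. apply (Hd' s). exact Hsd. split; assumption.
Qed.

Lemma CW_of (T : Rbar) (v : R -> R -> R) (t x : R) :
  continuous_within2 (in_strip T) (fun p => v (fst p) (snd p)) (t, x) -> CW T v t x.
Proof.
  intros H eps He.
  assert (HP := H (ball (v t x) (mkposreal eps He)) (locally_ball _ _)).
  destruct HP as [[d Hd] Hd'].
  exists d; split; [exact Hd|].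
  intros s y Hs H1 H2. apply (Hd' (s, y)). split; assumption. exact Hs.
Qed.

Lemma in_time_nbhd (T : Rbar) (t : R) : Rbar_lt t T -> exists d, 0 < d /\
  forall s, Rabs (s - t) < d -> Rbar_lt s T.
Proof.
  destruct T as [b| |]; intros H; unfold Rbar_lt in H.
  - exists (b - t); split; [lra|]. intros s Hs; simpl. apply Rabs_def2 in Hs. lra.
  - exists 1; split; [lra|]. auto.
  - contradiction.
Qed.

Lemma DW_interior (T : Rbar) (g : R -> R) (t l : R) : in_time T t -> 0 < t -> DW T g t l -> is_derive g t l.
Proof.
  intros [H0 Ht] Hpos H. apply is_derive_Reals. intros eps He.
  destruct (H eps He) as [d [Hd Hd']].
  destruct (in_time_nbhd T t Ht) as [d2 [Hd2 Hd2']].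
  assert (Hm : 0 < Rmin d (Rmin d2 t)) by (repeat apply Rmin_pos; lra).
  exists (mkposreal _ Hm). intros h Hh Hhd. simpl in Hhd.
  assert (Hh1 : Rabs h < d) by (eapply Rlt_le_trans; [exact Hhd| apply Rmin_l]).
  assert (Hh2 : Rabs h < d2) by (eapply Rlt_le_trans; [exact Hhd| eapply Rle_trans; [apply Rmin_r|apply Rmin_l]]).
  assert (Hh3 : Rabs h < t) by (eapply Rlt_le_trans; [exact Hhd| eapply Rle_trans; [apply Rmin_r|apply Rmin_r]]).
  assert (E : t + h - t = h) by ring.
  assert (K := Hd' (t + h)). rewrite E in K. apply K.
  - split. apply Rabs_def2 in Hh3. lra. apply Hd2'. rewrite E. exact Hh2.
  - intro E2. apply Hh. lra.
  - exact Hh1.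
Qed.

Lemma DW_CT (T : Rbar) (g : R -> R) (t l : R) : DW T g t l -> CT T g t.
Proof.
  intros H eps He.
  destruct (H 1 Rlt_0_1) as [d [Hd Hd']].
  set (m := Rmin d (eps / (Rabs l + 1))).
  assert (Hl : 0 < Rabs l + 1) by (generalize (Rabs_pos l); lra).
  assert (Hm : 0 < m) by (apply Rmin_pos; [lra| apply Rdiv_lt_0_compat; lra]).
  exists m; split; [exact Hm|].
  intros s Hs Hsd.
  destruct (Req_dec s t) as [E|E]. { subst. rewrite Rminus_eq_0, Rabs_R0. exact He. }
  assert (Hsd1 : Rabs (s - t) < d) by (eapply Rlt_le_trans; [exact Hsd|apply Rmin_l]).
  assert (Hsd2 : Rabs (s - t) < eps / (Rabs l + 1)) by (eapply Rlt_le_trans; [exact Hsd|apply Rmin_r]).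
  specialize (Hd' s Hs E Hsd1).
  assert (Hq : Rabs ((g s - g t) / (s - t)) < Rabs l + 1).
  { replace ((g s - g t) / (s - t)) with (((g s - g t) / (s - t) - l) + l) by ring.
    eapply Rle_lt_trans. apply Rabs_triang. lra. }
  assert (Hst : s - t <> 0) by lra.
  replace (g s - g t) with (((g s - g t) / (s - t)) * (s - t)) by (field; exact Hst).
  rewrite Rabs_mult.
  apply Rle_lt_trans with ((Rabs l + 1) * Rabs (s - t)).
  apply Rmult_le_compat_r. apply Rabs_pos. lra.
  apply Rlt_le_trans with ((Rabs l + 1) * (eps / (Rabs l + 1))).
  apply Rmult_lt_compat_l; lra.
  right; field; lra.
Qed.

Lemma Q_ge1 (y : R) : 1 <= Q y.
Proof.
  unfold Q. rewrite <- sqrt_1 at 1. apply sqrt_le_1_alt. generalize (pow2_ge_0 y); lra.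
Qed.

Lemma Q_sq (y : R) : Q y * Q y = 1 + y ^ 2.
Proof. unfold Q. apply sqrt_sqrt. generalize (pow2_ge_0 y); lra. Qed.

Lemma is_derive_arcsinh (x : R) : is_derive arcsinh x (/ sqrt (x ^ 2 + 1)).
Proof. apply is_derive_Reals, derivable_pt_lim_arcsinh. Qed.

Lemma isd_eq (f g : R -> R) (x l l' : R) :
  is_derive g x l' -> (forall t, g t = f t) -> l' = l -> is_derive f x l.
Proof. intros H E E'. subst l. eapply is_derive_ext; [exact E| exact H]. Qed.

Lemma is_derive_L (y : R) : is_derive L y (Q y).
Proof.
  unfold L, Q.
  assert (H1 : 0 < 1 + y ^ 2) by (generalize (pow2_ge_0 y); lra).
  assert (Hs : 0 < sqrt (1 + y ^ 2)) by (apply sqrt_lt_R0; exact H1).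
  assert (A : is_derive (fun u => u * sqrt (1 + u ^ 2)) y
     (sqrt (1 + y ^ 2) + y * y / sqrt (1 + y ^ 2))).
  { auto_derive. nra. replace (y * (y * 1)) with (y ^ 2) by ring. field. lra. }
  assert (B := is_derive_arcsinh y).
  assert (C := is_derive_plus _ _ _ _ _ A B).
  assert (D := is_derive_scal _ _ (/2) _ C).
  eapply isd_eq. exact D.
  - intros t; simpl. unfold plus; simpl. field.
  - unfold plus; simpl. replace (y ^ 2 + 1) with (1 + y ^ 2) by ring.
    assert (E : sqrt (1 + y ^ 2) * sqrt (1 + y ^ 2) = 1 + y ^ 2) by (apply sqrt_sqrt; lra).
  - unfold plus; simpl. replace (y * (y * 1)) with (y ^ 2) by ring.
    replace (y ^ 2 + 1) with (1 + y ^ 2) by ring.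
    set (s := sqrt (1 + y ^ 2)) in *.
    transitivity (/ 2 * ((s * s + y * y + 1) / s)). field; lra.
    rewrite E. replace (1 + y ^ 2 + y * y + 1) with (2 * (s * s)) by (rewrite E; ring).
    field; lra.
Qed.

Lemma isd_cont (f : R -> R) (x l : R) : is_derive f x l -> continuity_pt f x.
Proof.
  intros H. apply continuity_pt_filterlim. apply (ex_derive_continuous f x).
  exists l; exact H.
Qed.

Lemma isd_continuous (f : R -> R) (x l : R) : is_derive f x l -> continuous f x.
Proof. intros H. apply (ex_derive_continuous f x). exists l; exact H. Qed.

Lemma L_mono (y y' : R) : y <= y' -> y' - y <= L y' - L y.
Proof.
  intros H. destruct (Req_dec y y') as [E|E]. { subst; lra. }
  destruct (MVT_gen L y y' Q) as [c [Hc Hm]].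
  - intros x _. apply is_derive_L.
  - intros x _. eapply isd_cont. apply is_derive_L.
  - rewrite Hm. generalize (Q_ge1 c). intros. nra.
Qed.

Lemma L_0 : L 0 = 0.
Proof. unfold L. rewrite arcsinh_0. lra. Qed.

Lemma L_surj (z : R) : exists y, L y = z.
Proof.
  set (b := 2 * Rabs z + 2). set (a := - b).
  assert (Hb : 0 < b) by (unfold b; generalize (Rabs_pos z); lra).
  assert (H1 : b <= L b) by (generalize (L_mono 0 b); rewrite L_0; lra).
  assert (H2 : L a <= a) by (generalize (L_mono a 0); rewrite L_0; unfold a; lra).
  assert (Hz := Rle_abs z). assert (Hz' := Rle_abs (- z)). rewrite Rabs_Ropp in Hz'.
  destruct (IVT_gen L a b z) as [y [_ Hy]].
  - intros x. eapply isd_cont. apply is_derive_L.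
  - split.
    + eapply Rle_trans. apply Rmin_l. unfold a, b in *. lra.
    + eapply Rle_trans; [| apply Rmax_r]. unfold b in *; lra.
  - exists y; exact Hy.
Qed.

Lemma Linv_spec (z : R) : L (Linv z) = z.
Proof. unfold Linv. apply (epsilon_spec (inhabits 0) (fun y => L y = z)). apply L_surj. Qed.

Lemma L_lip (y y' : R) : Rabs (y - y') <= Rabs (L y - L y').
Proof.
  destruct (Rle_dec y y') as [H|H].
  - assert (K := L_mono y y' H). rewrite Rabs_left1 by lra. rewrite Rabs_left1 by lra. lra.
  - assert (K := L_mono y' y ltac:(lra)). rewrite Rabs_right by lra. rewrite Rabs_right by lra. lra.
Qed.

Lemma Linv_lip (z z' : R) : Rabs (Linv z - Linv z') <= Rabs (z - z').
Proof. rewrite <- (Linv_spec z) at 2. rewrite <- (Linv_spec z') at 2. apply L_lip. Qed.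

Lemma is_derive_Linv (z : R) : is_derive Linv z (/ Q (Linv z)).
Proof.
  apply is_derive_Reals. intros eps He.
  set (y := Linv z).
  assert (HL := proj1 (is_derive_Reals L y (Q y)) (is_derive_L y)).
  destruct (HL eps He) as [d Hd].
  exists d. intros h Hh Hhd.
  set (yh := Linv (z + h)).
  assert (Hne : yh - y <> 0).
  { intro E. assert (E2 : L yh = L y) by (f_equal; lra).
    unfold yh, y in E2. rewrite !Linv_spec in E2. apply Hh. lra. }
  assert (Hk : Rabs (yh - y) < d).
  { eapply Rle_lt_trans. apply Linv_lip. replace (z + h - z) with h by ring. exact Hhd. }
  specialize (Hd (yh - y) Hne Hk).
  replace (y + (yh - y)) with yh in Hd by ring.
  assert (Eh : L yh - L y = h) by (unfold yh, y; rewrite !Linv_spec; ring).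
  rewrite Eh in Hd.
  set (q := h / (yh - y)) in *.
  assert (Hq : 1 <= q).
  { unfold q. assert (K := L_lip yh y). rewrite Eh in K.
    destruct (Rle_dec y yh) as [H|H].
    - assert (K2 := L_mono y yh H). rewrite Eh in K2. apply Rle_trans with ((yh - y)/(yh-y)).
      right; field; lra. unfold Rdiv. apply Rmult_le_compat_r. left; apply Rinv_0_lt_compat; lra. lra.
    - assert (K2 := L_mono yh y ltac:(lra)). rewrite <- Eh.
      apply Rle_trans with ((y - yh)/(y - yh)). right; field; lra.
      replace ((L yh - L y) / (yh - y)) with ((L y - L yh) / (y - yh)) by (field; lra).
      unfold Rdiv. apply Rmult_le_compat_r. left; apply Rinv_0_lt_compat; lra. lra. }
  assert (HQ := Q_ge1 y).
  replace (Linv (z + h)) with yh by reflexivity. fold y.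
  replace ((yh - y) / h) with (/ q) by (unfold q; field; split; [exact Hh| exact Hne]).
  replace (/ q - / Q y) with ((Q y - q) / (q * Q y)) by (field; lra).
  unfold Rdiv. rewrite Rabs_mult. rewrite Rabs_Rinv by nra. rewrite (Rabs_right (q * Q y)) by nra.
  rewrite <- Rabs_Ropp. replace (- (Q y - q)) with (q - Q y) by ring.
  apply Rle_lt_trans with (Rabs (q - Q y) * 1).
  apply Rmult_le_compat_l. apply Rabs_pos.
  rewrite <- Rinv_1. apply Rinv_le_contravar. lra. nra. lra.
Qed.

Definition kd (eta : R) : R :=
  - Linv (- eta / 2) / (2 * (1 + Linv (- eta / 2) ^ 2)).

Lemma k_ge1 (eta : R) : 1 <= k eta.
Proof. unfold k. apply Q_ge1. Qed.

Lemma is_derive_Q (y : R) : is_derive Q y (y / Q y).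
Proof.
  unfold Q. assert (H1 : 0 < 1 + y ^ 2) by (generalize (pow2_ge_0 y); lra).
  assert (Hs : 0 < sqrt (1 + y ^ 2)) by (apply sqrt_lt_R0; exact H1).
  auto_derive. nra. replace (y * (y * 1)) with (y ^ 2) by ring. field. lra.
Qed.

Lemma is_derive_k (eta : R) : is_derive k eta (kd eta).
Proof.
  unfold k, kd.
  assert (A : is_derive (fun e => - e / 2) eta (- / 2)).
  { auto_derive. auto. field. }
  assert (B := is_derive_comp Linv (fun e => - e / 2) eta _ _ (is_derive_Linv _) A).
  assert (C := is_derive_comp Q (fun e => Linv (- e / 2)) eta _ _ (is_derive_Q _) B).
  eapply isd_eq. exact C. intros; reflexivity.
  simpl. unfold scal; simpl. unfold mult; simpl.
  set (y := Linv (- eta / 2)).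
  assert (HQ := Q_ge1 y). assert (E := Q_sq y).
  transitivity (- y / (2 * (Q y * Q y))). field. lra.
  rewrite E. reflexivity.
Qed.

Lemma Derive_k (eta : R) : Derive k eta = kd eta.
Proof. apply is_derive_unique, is_derive_k. Qed.

Lemma kd_cont (eta : R) : continuous kd eta.
Proof.
  unfold kd.
  apply (continuous_comp (fun e => Linv (- e / 2)) (fun y => - y / (2 * (1 + y ^ 2)))).
  - apply (continuous_comp (fun e => - e / 2) Linv).
    + apply (isd_continuous _ _ (- / 2)). auto_derive. auto. field.
    + eapply isd_continuous. apply is_derive_Linv.
  - set (y := Linv (- eta / 2)).
    assert (H1 : 0 < 1 + y ^ 2) by (generalize (pow2_ge_0 y); lra).
    apply (ex_derive_continuous (fun y => - y / (2 * (1 + y ^ 2)))).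
    auto_derive. nra.
Qed.

Lemma k_cont (eta : R) : continuous k eta.
Proof. eapply isd_continuous. apply is_derive_k. Qed.

Lemma cont_ed (f : R -> R) (x : R) : continuous f x ->
  forall eps, 0 < eps -> exists d, 0 < d /\ forall y, Rabs (y - x) < d -> Rabs (f y - f x) < eps.
Proof.
  intros H eps He.
  destruct (H (ball (f x) (mkposreal eps He)) (locally_ball _ _)) as [[d Hd] Hd'].
  exists d; split; [exact Hd|]. intros y Hy. apply (Hd' y). exact Hy.
Qed.

Lemma ed_cont (f : R -> R) (x : R) :
  (forall eps, 0 < eps -> exists d, 0 < d /\ forall y, Rabs (y - x) < d -> Rabs (f y - f x) < eps)
  -> continuous f x.
Proof.
  intros H P [[e He] HP].
  destruct (H e He) as [d [Hd Hd']].
  exists (mkposreal d Hd). intros y Hy. apply HP. apply (Hd' y). exact Hy.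
Qed.

Lemma Rmax0_lip (s c : R) : Rabs (Rmax 0 s - Rmax 0 c) <= Rabs (s - c).
Proof.
  unfold Rmax. destruct (Rle_dec 0 s); destruct (Rle_dec 0 c);
  unfold Rabs; repeat destruct Rcase_abs; lra.
Qed.

Lemma clamp_cont (T : Rbar) (p : R -> R) : Rbar_lt 0 T ->
  (forall s, in_time T s -> CT T p s) ->
  forall c : R, Rbar_lt c T -> continuous (fun s => p (Rmax 0 s)) c.
Proof.
  intros HT Hp c Hc.
  set (c' := Rmax 0 c).
  assert (Hc' : in_time T c').
  { split. apply Rmax_l. unfold c', Rmax; destruct (Rle_dec 0 c); assumption. }
  destruct (in_time_nbhd T c' (proj2 Hc')) as [d0 [Hd0 Hd0']].
  apply ed_cont. intros eps He.
  destruct (Hp c' Hc' eps He) as [d [Hd Hd']].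
  exists (Rmin d d0); split. apply Rmin_pos; assumption.
  intros y Hy.
  assert (Hl := Rmax0_lip y c).
  assert (H1 : Rabs (Rmax 0 y - c') < d) by (unfold c'; eapply Rle_lt_trans; [exact Hl| eapply Rlt_le_trans; [exact Hy| apply Rmin_l]]).
  assert (H2 : Rabs (Rmax 0 y - c') < d0) by (unfold c'; eapply Rle_lt_trans; [exact Hl| eapply Rlt_le_trans; [exact Hy| apply Rmin_r]]).
  apply Hd'. split. apply Rmax_l. apply Hd0'. exact H2. exact H1.
Qed.

Definition RCe (g : R -> R) : Prop :=
  forall eps, 0 < eps -> exists d, 0 < d /\ forall s, 0 <= s < d -> Rabs (g s - g 0) < eps.

Lemma RCe_of (g : R -> R) : continuous (fun s => g (Rmax 0 s)) 0 -> RCe g.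
Proof.
  intros H eps He. destruct (cont_ed _ _ H eps He) as [d [Hd Hd']].
  exists d; split; [exact Hd|]. intros s Hs.
  assert (K := Hd' s). rewrite Rmax_right in K by lra. rewrite Rmax_left in K by lra.
  apply K. rewrite Rminus_0_r, Rabs_right by lra. lra.
Qed.

Lemma mono0 (g g' : R -> R) (t1 : R) : 0 < t1 ->
  (forall s, 0 < s <= t1 -> is_derive g s (g' s)) ->
  (forall s, 0 < s <= t1 -> g' s <= 0) -> RCe g -> g t1 <= g 0.
Proof.
  intros Ht Hd Hneg Hrc.
  destruct (Rle_dec (g t1) (g 0)) as [H|H]; [exact H|]. exfalso.
  destruct (Hrc (g t1 - g 0) ltac:(lra)) as [d [Hd0 Hd0']].
  set (s := Rmin (d / 2) (t1 / 2)).
  assert (Hs1 : 0 < s) by (apply Rmin_pos; lra).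
  assert (Hs2 : s <= d / 2) by apply Rmin_l.
  assert (Hs3 : s <= t1 / 2) by apply Rmin_r.
  destruct (MVT_gen g s t1 g') as [c [Hc Hm]].
  - intros x Hx. rewrite Rmin_left in Hx by lra. rewrite Rmax_right in Hx by lra. apply Hd; lra.
  - intros x Hx. rewrite Rmin_left in Hx by lra. rewrite Rmax_right in Hx by lra.
    eapply isd_cont. apply Hd; lra.
  - rewrite Rmin_left in Hc by lra. rewrite Rmax_right in Hc by lra.
    assert (K := Hneg c ltac:(lra)).
    assert (K2 := Hd0' s ltac:(lra)). apply Rabs_def2 in K2.
    assert (g' c * (t1 - s) <= 0) by (apply Rmult_le_0_r; lra). lra.
Qed.

Lemma gronwall (phi phi' : R -> R) (K t1 : R) : 0 <= t1 ->
  (forall s, 0 < s <= t1 -> is_derive phi s (phi' s)) ->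
  (forall s, 0 < s <= t1 -> phi' s <= K * phi s) ->
  continuous (fun s => phi (Rmax 0 s)) 0 ->
  phi t1 <= phi 0 * exp (K * t1).
Proof.
  intros Ht Hd Hle Hc.
  destruct (Req_dec t1 0) as [E|E].
  { subst. rewrite Rmult_0_r, exp_0. lra. }
  set (psi := fun s => phi s * exp (- K * s)).
  assert (M : psi t1 <= psi 0).
  { apply (mono0 psi (fun s => phi' s * exp (- K * s) + phi s * (- K * exp (- K * s)))).
    - lra.
    - intros s Hs. unfold psi.
      eapply isd_eq. apply (is_derive_mult phi (fun s => exp (-K*s)) s (phi' s) (-K*exp(-K*s))).
      apply Hd; exact Hs. auto_derive; [auto| ring]. intros; apply Rmult_comm.
      intros; reflexivity. unfold plus, mult; simpl; ring.
    - intros s Hs. assert (K1 := Hle s Hs). assert (K2 := exp_pos (- K * s)). nra.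
    - apply RCe_of. unfold psi.
      apply (continuous_mult (fun s => phi (Rmax 0 s)) (fun s => exp (- K * Rmax 0 s))).
      exact Hc.
      apply (continuous_comp (fun s => Rmax 0 s) (fun y => exp (- K * y))).
      apply ed_cont. intros eps He. exists eps; split; [exact He|]. intros y Hy.
      eapply Rle_lt_trans. apply Rmax0_lip. exact Hy.
      apply (ex_derive_continuous (fun y => exp (- K * y))). auto_derive. auto. }
  unfold psi in M. rewrite Rmult_0_r, exp_0, Rmult_1_r in M.
  assert (E2 : exp (- K * t1) * exp (K * t1) = 1) by (rewrite <- exp_plus; replace (- K * t1 + K * t1) with 0 by ring; apply exp_0).
  assert (Hp := exp_pos (K * t1)).
  replace (phi t1) with (phi t1 * exp (- K * t1) * exp (K * t1)) by (rewrite Rmult_assoc, E2; ring).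
  apply Rmult_le_compat_r; lra.
Qed.

Lemma bound_on (T : Rbar) (p : R -> R) : Rbar_lt 0 T ->
  (forall s, in_time T s -> CT T p s) ->
  forall t0, in_time T t0 -> exists M, forall s, 0 <= s <= t0 -> Rabs (p s) <= M.
Proof.
  intros HT Hp t0 Ht0.
  destruct (continuity_ab_maj (fun s => Rabs (p (Rmax 0 s))) 0 t0 (proj1 Ht0)) as [Mx [HM _]].
  - intros c Hc. apply continuity_pt_filterlim.
    apply (continuous_comp (fun s => p (Rmax 0 s)) Rabs).
    apply (clamp_cont T p HT Hp). destruct Ht0 as [_ H2].
    destruct T; simpl in *; try lra; auto. apply continuous_Rabs.
  - exists (Rabs (p (Rmax 0 Mx))). intros s Hs. specialize (HM s Hs). simpl in HM.
    rewrite Rmax_right in HM by lra. exact HM.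
Qed.

Lemma Rbar_lt_le_trans' (z w : R) (T : Rbar) : z <= w -> Rbar_lt w T -> Rbar_lt z T.
Proof. intros H1 H2. destruct T; simpl in *; lra || auto. Qed.

Lemma uc_curve (T : Rbar) (G : R -> R -> R) (X : R -> R) (t0 : R) :
  (forall s, in_time T s -> CW T G s (X s)) ->
  (forall s, in_time T s -> CT T X s) ->
  in_time T t0 ->
  forall eps, 0 < eps -> exists d, 0 < d /\ forall s y, 0 <= s <= t0 ->
    Rabs (y - X s) < d -> Rabs (G s y - G s (X s)) < eps.
Proof.
  intros HG HX Ht0 eps He.
  assert (Ex : forall t, exists dl : posreal, in_time T t -> exists dG, 0 < dG /\ dl <= dG / 2 /\
     (forall s y, in_time T s -> Rabs (s - t) < dG -> Rabs (y - X t) < dG ->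
        Rabs (G s y - G t (X t)) < eps / 2) /\
     (forall s, in_time T s -> Rabs (s - t) < dl -> Rabs (X s - X t) < dG / 2)).
  { intros t. destruct (classic (in_time T t)) as [Ht|Ht].
    - destruct (HG t Ht (eps / 2) ltac:(lra)) as [dG [HdG HdG']].
      destruct (HX t Ht (dG / 2) ltac:(lra)) as [dX [HdX HdX']].
      assert (Hm : 0 < Rmin (dG / 2) dX) by (apply Rmin_pos; lra).
      exists (mkposreal _ Hm). intros _. exists dG. split; [exact HdG|]. split.
      apply Rmin_l. split. exact HdG'.
      intros s Hs Hst. apply HdX'. exact Hs. eapply Rlt_le_trans. exact Hst. apply Rmin_r.
    - exists (mkposreal 1 Rlt_0_1). intros H; contradiction. }
  set (delta := fun t => proj1_sig (constructive_indefinite_description _ (Ex t))).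
  assert (Hdelta : forall t, in_time T t -> exists dG, 0 < dG /\ delta t <= dG / 2 /\
     (forall s y, in_time T s -> Rabs (s - t) < dG -> Rabs (y - X t) < dG ->
        Rabs (G s y - G t (X t)) < eps / 2) /\
     (forall s, in_time T s -> Rabs (s - t) < delta t -> Rabs (X s - X t) < dG / 2)).
  { intros t. unfold delta. destruct (constructive_indefinite_description _ (Ex t)) as [dl Hdl].
    simpl. exact Hdl. }
  destruct (compactness_value_1d 0 t0 delta) as [d Hd].
  exists d; split. apply cond_pos.
  intros s y Hs Hy.
  apply Rnot_le_lt. intros Hn. apply (Hd s Hs). intros [t [Ht [Hst Hdt]]].
  assert (Hti : in_time T t) by (split; [lra| apply (Rbar_lt_le_trans' t t0 T); [lra| apply Ht0]]).
  assert (Hsi : in_time T s) by (split; [lra| apply (Rbar_lt_le_trans' s t0 T); [lra| apply Ht0]]).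
  destruct (Hdelta t Hti) as [dG [HdG [Hdl [HG1 HX1]]]].
  assert (K1 : Rabs (X s - X t) < dG / 2) by (apply HX1; assumption).
  assert (K2 : Rabs (s - t) < dG) by lra.
  assert (K3 : Rabs (y - X t) < dG).
  { replace (y - X t) with ((y - X s) + (X s - X t)) by ring.
    eapply Rle_lt_trans. apply Rabs_triang. lra. }
  assert (K4 := HG1 s y Hsi K2 K3).
  assert (K5 := HG1 s (X s) Hsi K2 ltac:(lra)).
  replace (G s y - G s (X s)) with ((G s y - G t (X t)) - (G s (X s) - G t (X t))) in Hn by ring.
  assert (K6 := Rabs_triang (G s y - G t (X t)) (- (G s (X s) - G t (X t)))).
  rewrite Rabs_Ropp in K6. unfold Rminus at 1 in Hn. lra.
Qed.

Lemma exit_lemma (T : Rbar) (D : R -> R) (t0 d : R) : in_time T t0 -> 0 < d ->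
  Rabs (D 0) < d ->
  (forall s, in_time T s -> CT T D s) ->
  (forall t, 0 <= t <= t0 -> (forall s, 0 <= s <= t -> Rabs (D s) < d) -> Rabs (D t) <= d / 2) ->
  forall t, 0 <= t <= t0 -> Rabs (D t) < d.
Proof.
  intros Ht0 Hd HD0 Hc Hstep. assert (Ht00 := proj1 Ht0).
  set (A := fun s => 0 <= s <= t0 /\ forall s', 0 <= s' <= s -> Rabs (D s') < d).
  assert (HA0 : A 0) by (split; [lra| intros s' Hs'; replace s' with 0 by lra; exact HD0]).
  assert (Hb : bound A) by (exists t0; intros s [Hs _]; lra).
  destruct (completeness A Hb (ex_intro _ 0 HA0)) as [tau [Hub Hlub]].
  assert (Htau0 : 0 <= tau) by (apply Hub; exact HA0).
  assert (Htau1 : tau <= t0) by (apply Hlub; intros s [Hs _]; lra).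
  assert (Hti : in_time T tau) by (split; [lra| apply (Rbar_lt_le_trans' tau t0 T); [lra| apply Ht0]]).
  assert (Hbelow : forall s, 0 <= s < tau -> Rabs (D s) < d).
  { intros s Hs. apply NNPP. intros Hn.
    assert (Hs_ub : forall a, A a -> a <= s).
    { intros a [Ha Ha']. apply Rnot_lt_le. intros Has. apply Hn. apply Ha'. lra. }
    assert (tau <= s) by (apply Hlub; exact Hs_ub). lra. }
  assert (Hbelow2 : forall s, 0 <= s < tau -> Rabs (D s) <= d / 2).
  { intros s Hs. apply Hstep. lra. intros s' Hs'. apply Hbelow. lra. }
  assert (Htau_half : Rabs (D tau) <= d / 2).
  { destruct (Req_dec tau 0) as [E|E].
    - rewrite E. apply Hstep. lra. intros s' Hs'. replace s' with 0 by lra. exact HD0.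
    - apply Rnot_lt_le. intros Hgt.
      destruct (Hc tau Hti (Rabs (D tau) - d / 2) ltac:(lra)) as [e [He He']].
      set (s := Rmax 0 (tau - e / 2)).
      assert (Hs1 : 0 <= s) by apply Rmax_l.
      assert (Hs2 : s < tau) by (unfold s, Rmax; destruct Rle_dec; lra).
      assert (Hs3 : tau - e / 2 <= s) by apply Rmax_r.
      assert (K := He' s ltac:(split; [lra| apply (Rbar_lt_le_trans' s t0 T); [lra| apply Ht0]])
                      ltac:(rewrite Rabs_left by lra; lra)).
      assert (K2 := Hbelow2 s ltac:(lra)).
      assert (K3 := Rabs_triang_inv (D tau) (D s)).
      rewrite <- Rabs_Ropp in K. replace (- (D s - D tau)) with (D tau - D s) in K by ring. lra. }
  assert (Hupto : forall s, 0 <= s <= tau -> Rabs (D s) < d).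
  { intros s Hs. destruct (Req_dec s tau) as [E|E]. subst; lra. apply Hbelow; lra. }
  assert (Htau_t0 : tau = t0).
  { destruct (Req_dec tau t0) as [E|E]; [exact E|]. exfalso.
    destruct (Hc tau Hti (d / 2) ltac:(lra)) as [e [He He']].
    set (s := Rmin (tau + e / 2) t0).
    assert (Hs1 : tau < s) by (unfold s, Rmin; destruct Rle_dec; lra).
    assert (Hs2 : s <= t0) by apply Rmin_r.
    assert (Hs3 : s <= tau + e / 2) by apply Rmin_l.
    assert (HAs : A s).
    { split. lra. intros s' Hs'. destruct (Rle_dec s' tau) as [H|H]. apply Hupto; lra.
      assert (K := He' s' ltac:(split; [lra| apply (Rbar_lt_le_trans' s' t0 T); [lra| apply Ht0]])
                      ltac:(rewrite Rabs_right by lra; lra)).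
      assert (K3 := Rabs_triang_inv (D s') (D tau)). lra. }
    assert (s <= tau) by (apply Hub; exact HAs). lra. }
  intros t Ht. apply Hupto. lra.
Qed.

Lemma ftc_clamp (T : Rbar) (p : R -> R) : Rbar_lt 0 T ->
  (forall s, in_time T s -> CT T p s) ->
  forall t : R, Rbar_lt t T ->
  is_derive (fun b => RInt (fun s => p (Rmax 0 s)) 0 b) t (p (Rmax 0 t)).
Proof.
  intros HT Hp t Ht.
  apply (is_derive_RInt (fun s => p (Rmax 0 s)) (fun b => RInt (fun s => p (Rmax 0 s)) 0 b) 0 t).
  - destruct (in_time_nbhd T t Ht) as [d [Hd Hd']].
    exists (mkposreal d Hd). intros b Hb. apply (RInt_correct (V := R_CompleteNormedModule) (fun s => p (Rmax 0 s))).
    apply ex_RInt_continuous. intros z Hz.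
    apply (clamp_cont T p HT Hp).
    assert (Hbt : Rbar_lt b T) by (apply Hd'; exact Hb).
    apply (Rbar_lt_le_trans' z (Rmax 0 b) T).
    + eapply Rle_trans. apply Hz. apply Rle_refl.
    + unfold Rmax; destruct Rle_dec; assumption.
  - apply (clamp_cont T p HT Hp). exact Ht.
Qed.

Lemma CW_plus (T : Rbar) (a b : R -> R -> R) (t x : R) :
  CW T a t x -> CW T b t x -> CW T (fun s y => a s y + b s y) t x.
Proof.
  intros Ha Hb eps He.
  destruct (Ha (eps/2) ltac:(lra)) as [d1 [Hd1 Hd1']].
  destruct (Hb (eps/2) ltac:(lra)) as [d2 [Hd2 Hd2']].
  exists (Rmin d1 d2); split. apply Rmin_pos; lra.
  intros s y Hs H1 H2.
  assert (A := Hd1' s y Hs (Rlt_le_trans _ _ _ H1 (Rmin_l _ _)) (Rlt_le_trans _ _ _ H2 (Rmin_l _ _))).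
  assert (B := Hd2' s y Hs (Rlt_le_trans _ _ _ H1 (Rmin_r _ _)) (Rlt_le_trans _ _ _ H2 (Rmin_r _ _))).
  replace (a s y + b s y - (a t x + b t x)) with ((a s y - a t x) + (b s y - b t x)) by ring.
  eapply Rle_lt_trans. apply Rabs_triang. lra.
Qed.

Lemma CW_scal (T : Rbar) (c : R) (a : R -> R -> R) (t x : R) :
  CW T a t x -> CW T (fun s y => c * a s y) t x.
Proof.
  intros Ha eps He.
  destruct (Ha (eps / (Rabs c + 1))) as [d [Hd Hd']].
  { apply Rdiv_lt_0_compat. lra. generalize (Rabs_pos c); lra. }
  exists d; split; [exact Hd|]. intros s y Hs H1 H2.
  specialize (Hd' s y Hs H1 H2).
  replace (c * a s y - c * a t x) with (c * (a s y - a t x)) by ring.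
  rewrite Rabs_mult.
  assert (Hc := Rabs_pos c).
  apply Rle_lt_trans with ((Rabs c + 1) * Rabs (a s y - a t x)).
  apply Rmult_le_compat_r. apply Rabs_pos. lra.
  apply Rlt_le_trans with ((Rabs c + 1) * (eps / (Rabs c + 1))).
  apply Rmult_lt_compat_l; lra. right; field; lra.
Qed.

Lemma CW_comp (T : Rbar) (f : R -> R) (a : R -> R -> R) (t x : R) :
  CW T a t x -> continuous f (a t x) -> CW T (fun s y => f (a s y)) t x.
Proof.
  intros Ha Hf eps He.
  destruct (cont_ed f _ Hf eps He) as [e [He1 He2]].
  destruct (Ha e He1) as [d [Hd Hd']].
  exists d; split; [exact Hd|]. intros s y Hs H1 H2. apply He2. apply Hd'; assumption.
Qed.

Lemma CW_mult (T : Rbar) (a b : R -> R -> R) (t x : R) :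
  CW T a t x -> CW T b t x -> CW T (fun s y => a s y * b s y) t x.
Proof.
  intros Ha Hb eps He.
  set (A := Rabs (a t x)). set (B := Rabs (b t x)).
  assert (HA : 0 <= A) by apply Rabs_pos. assert (HB : 0 <= B) by apply Rabs_pos.
  set (e := Rmin 1 (eps / (2 * (A + B + 1)))).
  assert (He0 : 0 < e) by (apply Rmin_pos; [lra| apply Rdiv_lt_0_compat; lra]).
  assert (He1 : e <= 1) by apply Rmin_l.
  assert (He2 : e * (A + B + 1) <= eps / 2).
  { apply Rle_trans with (eps / (2 * (A + B + 1)) * (A + B + 1)).
    apply Rmult_le_compat_r. lra. apply Rmin_r. right; field; lra. }
  destruct (Ha e He0) as [d1 [Hd1 Hd1']].
  destruct (Hb e He0) as [d2 [Hd2 Hd2']].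
  exists (Rmin d1 d2); split. apply Rmin_pos; lra.
  intros s y Hs H1 H2.
  assert (K1 := Hd1' s y Hs (Rlt_le_trans _ _ _ H1 (Rmin_l _ _)) (Rlt_le_trans _ _ _ H2 (Rmin_l _ _))).
  assert (K2 := Hd2' s y Hs (Rlt_le_trans _ _ _ H1 (Rmin_r _ _)) (Rlt_le_trans _ _ _ H2 (Rmin_r _ _))).
  replace (a s y * b s y - a t x * b t x) with
    ((a s y - a t x) * (b s y - b t x) + (a s y - a t x) * b t x + a t x * (b s y - b t x)) by ring.
  eapply Rle_lt_trans. apply Rabs_triang.
  eapply Rle_lt_trans. apply Rplus_le_compat_r. apply Rabs_triang.
  rewrite !Rabs_mult. fold A B.
  assert (P1 : Rabs (a s y - a t x) * Rabs (b s y - b t x) <= e * e).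
  { apply Rmult_le_compat; try apply Rabs_pos; lra. }
  assert (P2 : Rabs (a s y - a t x) * B <= e * B) by (apply Rmult_le_compat_r; lra).
  assert (P3 : A * Rabs (b s y - b t x) <= A * e) by (apply Rmult_le_compat_l; lra).
  assert (P4 : e * e < e * 1 \/ e * e = e * 1).
  { destruct (Rle_lt_or_eq_dec _ _ He1) as [H|H]. left; apply Rmult_lt_compat_l; lra. right; rewrite H; ring. }
  apply Rle_lt_trans with (e * e + e * B + A * e). lra.
  apply Rle_lt_trans with (e * (A + B + 1)).
  - nra.
  - lra.
Qed.

Lemma mvt_y (f f' : R -> R) (x y : R) : (forall z, is_derive f z (f' z)) ->
  exists xi, Rabs (xi - x) <= Rabs (y - x) /\ f y - f x = f' xi * (y - x).
Proof.
  intros Hd. destruct (MVT_gen f x y f') as [c [Hc Hm]].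
  - intros; apply Hd.
  - intros; eapply isd_cont; apply Hd.
  - exists c. split; [| exact Hm].
    unfold Rmin, Rmax in Hc. destruct (Rle_dec x y);
    unfold Rabs; repeat destruct Rcase_abs; lra.
Qed.

Lemma C1_CW (T : Rbar) (u ut ux : R -> R -> R) (t x : R) :
  C1_strip T u ut ux -> in_time T t -> CW T u t x.
Proof.
  intros Hu Ht eps He.
  destruct (Hu t x Ht) as [H1 [_ [_ H4]]].
  assert (Cx := CW_of T ux t x H4).
  assert (Ct := DW_CT T _ t _ (DW_of T _ t _ H1)).
  destruct (Cx 1 Rlt_0_1) as [d1 [Hd1 Hd1']].
  destruct (Ct (eps / 2) ltac:(lra)) as [d2 [Hd2 Hd2']].
  set (B := Rabs (ux t x) + 1).
  assert (HB : 0 < B) by (unfold B; generalize (Rabs_pos (ux t x)); lra).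
  set (d3 := eps / (2 * B)).
  assert (Hd3 : 0 < d3) by (unfold d3; apply Rdiv_lt_0_compat; lra).
  exists (Rmin d1 (Rmin d2 d3)); split. repeat apply Rmin_pos; lra.
  intros s y Hs Hst Hyx.
  assert (Hst1 : Rabs (s - t) < d1) by (eapply Rlt_le_trans; [exact Hst| apply Rmin_l]).
  assert (Hst2 : Rabs (s - t) < d2) by (eapply Rlt_le_trans; [exact Hst| eapply Rle_trans; [apply Rmin_r| apply Rmin_l]]).
  assert (Hyx1 : Rabs (y - x) < d1) by (eapply Rlt_le_trans; [exact Hyx| apply Rmin_l]).
  assert (Hyx3 : Rabs (y - x) < d3) by (eapply Rlt_le_trans; [exact Hyx| eapply Rle_trans; [apply Rmin_r| apply Rmin_r]]).
  destruct (mvt_y (u s) (ux s) x y) as [xi [Hxi Hm]].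
  { intros z. apply (Hu s z Hs). }
  assert (Kx := Hd1' s xi Hs Hst1 ltac:(lra)).
  assert (Kux : Rabs (ux s xi) <= B).
  { unfold B. replace (ux s xi) with ((ux s xi - ux t x) + ux t x) by ring.
    eapply Rle_trans. apply Rabs_triang. lra. }
  assert (Kt := Hd2' s Hs Hst2).
  replace (u s y - u t x) with ((u s y - u s x) + (u s x - u t x)) by ring.
  eapply Rle_lt_trans. apply Rabs_triang. rewrite Hm, Rabs_mult.
  assert (Rabs (ux s xi) * Rabs (y - x) <= B * d3).
  { apply Rmult_le_compat; try apply Rabs_pos; lra. }
  assert (B * d3 = eps / 2) by (unfold d3; field; lra). lra.
Qed.

Lemma CT_curve (T : Rbar) (G : R -> R -> R) (X : R -> R) (t : R) :
  CW T G t (X t) -> CT T X t -> CT T (fun s => G s (X s)) t.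
Proof.
  intros HG HX eps He.
  destruct (HG eps He) as [d [Hd Hd']].
  destruct (HX d Hd) as [d2 [Hd2 Hd2']].
  exists (Rmin d d2); split. apply Rmin_pos; lra.
  intros s Hs Hst. apply Hd'. exact Hs. eapply Rlt_le_trans; [exact Hst| apply Rmin_l].
  apply Hd2'. exact Hs. eapply Rlt_le_trans; [exact Hst| apply Rmin_r].
Qed.

Lemma chain_DW (T : Rbar) (u ut ux : R -> R -> R) (X : R -> R) (t d : R) :
  C1_strip T u ut ux -> in_time T t -> DW T X t d ->
  DW T (fun s => u s (X s)) t (ut t (X t) + ux t (X t) * d).
Proof.
  intros Hu Ht HX eps He.
  destruct (Hu t (X t) Ht) as [H1 [_ [_ H4]]].
  assert (Cx := CW_of T ux t (X t) H4).
  assert (Dt := DW_of T _ t _ H1).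
  assert (CX := DW_CT T X t d HX).
  set (A := Rabs (ux t (X t)) + 1). set (Dd := Rabs d + 1).
  assert (HA : 0 < A) by (unfold A; generalize (Rabs_pos (ux t (X t))); lra).
  assert (HDd : 0 < Dd) by (unfold Dd; generalize (Rabs_pos d); lra).
  set (e1 := Rmin 1 (eps / (3 * A))).
  assert (He1 : 0 < e1) by (apply Rmin_pos; [lra| apply Rdiv_lt_0_compat; lra]).
  destruct (HX e1 He1) as [d1 [Hd1 Hd1']].
  destruct (Cx (eps / (3 * Dd))) as [d2 [Hd2 Hd2']]. { apply Rdiv_lt_0_compat; lra. }
  destruct (CX d2 Hd2) as [d3 [Hd3 Hd3']].
  destruct (Dt (eps / 3) ltac:(lra)) as [d4 [Hd4 Hd4']].
  exists (Rmin (Rmin d1 d2) (Rmin d3 d4)); split. repeat apply Rmin_pos; lra.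
  intros s Hs Hst Hsd.
  assert (S1 : Rabs (s - t) < d1) by (eapply Rlt_le_trans; [exact Hsd| eapply Rle_trans; [apply Rmin_l| apply Rmin_l]]).
  assert (S2 : Rabs (s - t) < d2) by (eapply Rlt_le_trans; [exact Hsd| eapply Rle_trans; [apply Rmin_l| apply Rmin_r]]).
  assert (S3 : Rabs (s - t) < d3) by (eapply Rlt_le_trans; [exact Hsd| eapply Rle_trans; [apply Rmin_r| apply Rmin_l]]).
  assert (S4 : Rabs (s - t) < d4) by (eapply Rlt_le_trans; [exact Hsd| eapply Rle_trans; [apply Rmin_r| apply Rmin_r]]).
  destruct (mvt_y (u s) (ux s) (X t) (X s)) as [xi [Hxi Hm]].
  { intros z. apply (Hu s z Hs). }
  set (q := (X s - X t) / (s - t)).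
  assert (Hq : Rabs (q - d) < e1) by (apply Hd1'; assumption).
  assert (Hq1 : Rabs (q - d) <= 1) by (assert (e1 <= 1) by apply Rmin_l; lra).
  assert (Hqb : Rabs q <= Dd).
  { unfold Dd. replace q with ((q - d) + d) by ring. eapply Rle_trans. apply Rabs_triang. lra. }
  assert (HXs := Hd3' s Hs S3).
  assert (Hux : Rabs (ux s xi - ux t (X t)) < eps / (3 * Dd)) by (apply Hd2'; [exact Hs| exact S2| lra]).
  assert (Hut := Hd4' s Hs Hst S4). simpl in Hut.
  assert (Hst0 : s - t <> 0) by lra.
  replace ((u s (X s) - u t (X t)) / (s - t) - (ut t (X t) + ux t (X t) * d)) with
    ((ux s xi - ux t (X t)) * q + ux t (X t) * (q - d) +
     ((u s (X t) - u t (X t)) / (s - t) - ut t (X t))).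
  2:{ unfold q. replace (u s (X s) - u t (X t)) with ((u s (X s) - u s (X t)) + (u s (X t) - u t (X t))) by ring.
      rewrite Hm. field. exact Hst0. }
  eapply Rle_lt_trans. apply Rabs_triang.
  eapply Rle_lt_trans. apply Rplus_le_compat_r. apply Rabs_triang.
  rewrite !Rabs_mult.
  assert (P1 : Rabs (ux s xi - ux t (X t)) * Rabs q <= eps / (3 * Dd) * Dd).
  { apply Rmult_le_compat; try apply Rabs_pos; lra. }
  assert (P2 : Rabs (ux t (X t)) * Rabs (q - d) <= A * (eps / (3 * A))).
  { apply Rmult_le_compat; try apply Rabs_pos. unfold A; lra.
    assert (e1 <= eps / (3 * A)) by apply Rmin_r. lra. }
  assert (E1 : eps / (3 * Dd) * Dd = eps / 3) by (field; lra).
  assert (E2 : A * (eps / (3 * A)) = eps / 3) by (field; lra).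
  lra.
Qed.

Lemma CT0_clamp (T : Rbar) (g : R -> R) : Rbar_lt 0 T -> CT T g 0 ->
  continuous (fun s => g (Rmax 0 s)) 0.
Proof.
  intros HT H. apply ed_cont. intros eps He.
  destruct (H eps He) as [d [Hd Hd']].
  destruct (in_time_nbhd T 0 HT) as [d0 [Hd0 Hd0']].
  exists (Rmin d d0); split. apply Rmin_pos; lra.
  intros y Hy. rewrite (Rmax_left 0 0) by lra.
  assert (Hl := Rmax0_lip y 0). rewrite (Rmax_left 0 0) in Hl by lra.
  apply Hd'. split. apply Rmax_l. apply Hd0'. eapply Rle_lt_trans. exact Hl.
  eapply Rlt_le_trans. exact Hy. apply Rmin_r.
  eapply Rle_lt_trans. exact Hl. eapply Rlt_le_trans. exact Hy. apply Rmin_l.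
Qed.

Lemma CT_RCe (T : Rbar) (g : R -> R) : Rbar_lt 0 T -> CT T g 0 -> RCe g.
Proof. intros HT H. apply RCe_of. apply (CT0_clamp T); assumption. Qed.

Lemma const_lemma (g : R -> R) (t : R) : 0 <= t ->
  (forall s, 0 < s <= t -> is_derive g s 0) -> RCe g -> g t = g 0.
Proof.
  intros Ht Hd Hc. destruct (Req_dec t 0) as [E|E]. { subst; reflexivity. }
  assert (A := mono0 g (fun _ => 0) t ltac:(lra) Hd ltac:(intros; lra) Hc).
  assert (B := mono0 (fun s => - g s) (fun _ => 0) t ltac:(lra)).
  assert (B' : - g t <= - g 0).
  { apply B. intros s Hs. eapply isd_eq. apply is_derive_opp. apply Hd; exact Hs.
    intros; reflexivity. unfold opp; simpl; ring. intros; lra.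
    intros eps He. destruct (Hc eps He) as [d [Hd0 Hd0']]. exists d; split; [exact Hd0|].
    intros s Hs. replace (- g s - - g 0) with (- (g s - g 0)) by ring. rewrite Rabs_Ropp. auto. }
  lra.
Qed.

Lemma CT_minus (T : Rbar) (f g : R -> R) (t : R) : CT T f t -> CT T g t ->
  CT T (fun s => f s - g s) t.
Proof.
  intros Hf Hg eps He.
  destruct (Hf (eps/2) ltac:(lra)) as [d1 [Hd1 Hd1']].
  destruct (Hg (eps/2) ltac:(lra)) as [d2 [Hd2 Hd2']].
  exists (Rmin d1 d2); split. apply Rmin_pos; lra.
  intros s Hs Hst.
  assert (A := Hd1' s Hs (Rlt_le_trans _ _ _ Hst (Rmin_l _ _))).
  assert (B := Hd2' s Hs (Rlt_le_trans _ _ _ Hst (Rmin_r _ _))).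
  replace (f s - g s - (f t - g t)) with ((f s - f t) - (g s - g t)) by ring.
  unfold Rminus at 1. eapply Rle_lt_trans. apply Rabs_triang. rewrite Rabs_Ropp. lra.
Qed.

Lemma CT_comp (T : Rbar) (f g : R -> R) (t : R) : CT T g t -> continuous f (g t) ->
  CT T (fun s => f (g s)) t.
Proof.
  intros Hg Hf eps He.
  destruct (cont_ed f _ Hf eps He) as [e [He1 He2]].
  destruct (Hg e He1) as [d [Hd Hd']].
  exists d; split; [exact Hd|]. intros s Hs Hst. apply He2. apply Hd'; assumption.
Qed.

Lemma sq_lt (x e : R) : 0 < e -> x * x < e * e -> Rabs x < e.
Proof. intros He H. apply Rnot_le_lt. intros H2. unfold Rabs in H2; destruct Rcase_abs; nra. Qed.

Lemma exp_ge1 (x : R) : 0 <= x -> 1 <= exp x.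
Proof.
  intros H. destruct (Req_dec x 0) as [E|E]. subst; rewrite exp_0; lra.
  rewrite <- exp_0. left. apply exp_increasing. lra.
Qed.

Lemma exp_mono (x y : R) : x <= y -> exp x <= exp y.
Proof.
  intros H. destruct (Req_dec x y) as [E|E]. subst; lra. left; apply exp_increasing; lra.
Qed.

Lemma Rmax0_cont (x : R) : continuous (fun s => Rmax 0 s) x.
Proof.
  apply ed_cont. intros eps He. exists eps; split; [exact He|]. intros y Hy.
  eapply Rle_lt_trans. apply Rmax0_lip. exact Hy.
Qed.

Lemma abs_le_sq (x y : R) : x * x <= y * y -> 0 <= y -> Rabs x <= y.
Proof. intros H Hy. apply Rnot_lt_le. intros H2. unfold Rabs in H2; destruct Rcase_abs; nra. Qed.

Lemma diff_dep (T : Rbar) (HT : Rbar_lt 0 T) (F Fx : R -> R -> R) (X : R -> R -> R)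
  (c : R -> R) (a : R)
  (HF : forall s y, in_time T s -> is_derive (F s) y (Fx s y))
  (HFx : forall s y, in_time T s -> CW T Fx s y)
  (HX : forall s al, in_time T s -> DW T (fun s => X s al) s (F s (X s al)))
  (HX0 : forall al, X 0 al = al)
  (Hc0 : c 0 = 1)
  (Hc : forall s, in_time T s -> 0 < s -> is_derive c s (Fx s (X s a) * c s))
  (Hcc : continuous c 0) :
  forall t0, in_time T t0 -> is_derive (fun al => X t0 al) a (c t0).
Proof.
  intros t0 Ht0. assert (Ht00 := proj1 Ht0).
  set (Xa := fun s => X s a).
  assert (CTX : forall al s, in_time T s -> CT T (fun s => X s al) s).
  { intros al s Hs. eapply DW_CT. apply HX; exact Hs. }
  assert (Hin : forall s, 0 <= s <= t0 -> in_time T s).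
  { intros s Hs. split. lra. apply (Rbar_lt_le_trans' s t0 T). lra. apply Ht0. }
  assert (pCT : forall s, in_time T s -> CT T (fun s => Fx s (Xa s)) s).
  { intros s Hs. apply CT_curve. apply HFx; exact Hs. apply CTX; exact Hs. }
  destruct (uc_curve T Fx Xa t0 (fun s Hs => HFx s (Xa s) Hs) (CTX a) Ht0 1 Rlt_0_1)
    as [d1 [Hd1 Hd1']].
  destruct (bound_on T (fun s => Fx s (Xa s)) HT pCT t0 Ht0) as [Mp HMp].
  set (M := Rabs Mp + 1).
  assert (HM0 : 1 <= M) by (unfold M; generalize (Rabs_pos Mp); lra).
  assert (HM : forall s y, 0 <= s <= t0 -> Rabs (y - Xa s) < d1 -> Rabs (Fx s y) <= M).
  { intros s y Hs Hy. specialize (Hd1' s y Hs Hy). specialize (HMp s Hs).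
    assert (Mp <= Rabs Mp) by apply Rle_abs.
    replace (Fx s y) with ((Fx s y - Fx s (Xa s)) + Fx s (Xa s)) by ring.
    eapply Rle_trans. apply Rabs_triang. unfold M. lra. }
  apply is_derive_Reals. intros eps He.
  set (K1 := exp (2 * M * t0)). set (K2 := exp ((2 * M + 1) * t0)).
  assert (HK1 : 1 <= K1) by (apply exp_ge1; nra).
  assert (HK2 : 1 <= K2) by (apply exp_ge1; nra).
  set (e' := eps / (K1 * K2 + 1)).
  assert (He' : 0 < e') by (apply Rdiv_lt_0_compat; nra).
  destruct (uc_curve T Fx Xa t0 (fun s Hs => HFx s (Xa s) Hs) (CTX a) Ht0 e' He')
    as [d2 [Hd2 Hd2']].
  assert (Hdel : 0 < Rmin (d1 / (2 * K1)) (d2 / (2 * K1))).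
  { apply Rmin_pos; apply Rdiv_lt_0_compat; lra. }
  exists (mkposreal _ Hdel). intros h Hh Hhd. simpl in Hhd.
  assert (Hh1 : Rabs h < d1 / (2 * K1)) by (eapply Rlt_le_trans; [exact Hhd| apply Rmin_l]).
  assert (Hh2 : Rabs h < d2 / (2 * K1)) by (eapply Rlt_le_trans; [exact Hhd| apply Rmin_r]).
  assert (Hh1' : Rabs h * K1 < d1 / 2) by (apply Rlt_le_trans with (d1 / (2 * K1) * K1); [apply Rmult_lt_compat_r; lra| right; field; lra]).
  assert (Hh2' : Rabs h * K1 < d2 / 2) by (apply Rlt_le_trans with (d2 / (2 * K1) * K1); [apply Rmult_lt_compat_r; lra| right; field; lra]).
  assert (Hhabs : 0 < Rabs h) by (apply Rabs_pos_lt; exact Hh).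
  set (D := fun s => X s (a + h) - Xa s).
  assert (HD0 : D 0 = h) by (unfold D, Xa; rewrite !HX0; ring).
  assert (HDd : forall s, in_time T s -> 0 < s ->
     is_derive D s (F s (X s (a + h)) - F s (Xa s))).
  { intros s Hs Hp. unfold D. apply (is_derive_minus (fun s => X s (a + h)) Xa).
    apply (DW_interior T _ s _ Hs Hp (HX s (a + h) Hs)).
    apply (DW_interior T _ s _ Hs Hp (HX s a Hs)). }
  assert (Hmv : forall s, in_time T s -> exists xi, Rabs (xi - Xa s) <= Rabs (D s) /\
      F s (X s (a + h)) - F s (Xa s) = Fx s xi * D s).
  { intros s Hs. destruct (mvt_y (F s) (Fx s) (Xa s) (X s (a + h))) as [xi [H1 H2]].
    intros z; apply HF; exact Hs. exists xi. split; assumption. }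
  assert (CTD : forall s, in_time T s -> CT T D s).
  { intros s Hs. apply CT_minus; apply CTX; exact Hs. }
  assert (CD0 : continuous (fun s => D (Rmax 0 s)) 0) by (apply (CT0_clamp T); [exact HT| apply CTD, Hin; lra]).
  assert (Hgr : forall t, 0 <= t <= t0 -> (forall s, 0 <= s <= t -> Rabs (D s) < d1) ->
      D t * D t <= h * h * K1).
  { intros t Ht Hbd.
    assert (G := gronwall (fun s => D s * D s)
       (fun s => 2 * D s * (F s (X s (a + h)) - F s (Xa s))) (2 * M) t (proj1 Ht)).
    simpl in G. rewrite HD0 in G.
    apply Rle_trans with (h * h * exp (2 * M * t)).
    - apply G.
      + intros s Hs. eapply isd_eq. apply (is_derive_mult D D). apply HDd. apply Hin; lra. lra.
        apply HDd. apply Hin; lra. lra. intros; apply Rmult_comm. intros; reflexivity.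
        unfold plus, mult; simpl; ring.
      + intros s Hs. destruct (Hmv s (Hin s ltac:(lra))) as [xi [Hxi Exi]]. rewrite Exi.
        assert (Hb := HM s xi ltac:(lra) ltac:(specialize (Hbd s ltac:(lra)); lra)).
        assert (Fx s xi <= M) by (eapply Rle_trans; [apply Rle_abs| exact Hb]).
        assert (0 <= D s * D s) by nra. nra.
      + apply (continuous_mult (fun s => D (Rmax 0 s)) (fun s => D (Rmax 0 s))); exact CD0.
    - apply Rmult_le_compat_l. nra. unfold K1. apply exp_mono. nra. }
  assert (Hsq : forall x, x * x <= h * h * K1 -> Rabs x <= Rabs h * K1).
  { intros x Hx. apply abs_le_sq. 2:{ generalize (Rabs_pos h); nra. }
    assert (h * h = Rabs h * Rabs h) by (rewrite <- Rabs_mult; rewrite Rabs_right; nra).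
    generalize (Rabs_pos h); nra. }
  assert (Htube : forall t, 0 <= t <= t0 -> Rabs (D t) < d1).
  { apply (exit_lemma T D t0 d1 Ht0 Hd1).
    - rewrite HD0. nra.
    - exact CTD.
    - intros t Ht Hbd. assert (K := Hsq _ (Hgr t Ht Hbd)). lra. }
  assert (HDb : forall t, 0 <= t <= t0 -> Rabs (D t) <= Rabs h * K1).
  { intros t Ht. apply Hsq. apply Hgr. exact Ht. intros s Hs. apply Htube. lra. }
  set (eta := e' * (Rabs h * K1)).
  set (E := fun s => D s - h * c s).
  assert (HE0 : E 0 = 0) by (unfold E; rewrite HD0, Hc0; ring).
  assert (G := gronwall (fun s => E s * E s + eta * eta)
       (fun s => 2 * E s * ((F s (X s (a + h)) - F s (Xa s)) - h * (Fx s (Xa s) * c s)))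
       (2 * M + 1) t0 Ht00).
  simpl in G. rewrite HE0 in G.
  assert (GE : E t0 * E t0 + eta * eta <= (0 * 0 + eta * eta) * K2).
  { apply G.
    - intros s Hs.
      assert (HEd : is_derive E s ((F s (X s (a + h)) - F s (Xa s)) - h * (Fx s (Xa s) * c s))).
      { eapply isd_eq. apply (is_derive_minus D (fun s => h * c s)).
        apply HDd. apply Hin; lra. lra. apply is_derive_scal. apply Hc. apply Hin; lra. lra.
        intros; reflexivity. reflexivity. }
      eapply isd_eq. apply (is_derive_plus (fun s => E s * E s) (fun _ => eta * eta)).
      apply (is_derive_mult E E). exact HEd. exact HEd.
      intros; apply Rmult_comm. apply is_derive_const.
      intros; reflexivity. unfold plus, mult, zero; simpl. ring.
    - intros s Hs. destruct (Hmv s (Hin s ltac:(lra))) as [xi [Hxi Exi]]. rewrite Exi.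
      assert (Hts := Htube s ltac:(lra)). assert (Hdb := HDb s ltac:(lra)).
      assert (Hp : Rabs (Fx s (Xa s)) <= M).
      { apply HM. lra. rewrite Rminus_eq_0, Rabs_R0. exact Hd1. }
      assert (Hdiff : Rabs (Fx s xi - Fx s (Xa s)) < e').
      { apply Hd2'. lra. lra. }
      replace (Fx s xi * D s - h * (Fx s (Xa s) * c s)) with
        (Fx s (Xa s) * E s + (Fx s xi - Fx s (Xa s)) * D s) by (unfold E; ring).
      set (p := Fx s (Xa s)) in *. set (q := Fx s xi - p) in *.
      assert (Hqd : Rabs (q * D s) <= eta).
      { unfold eta. rewrite Rabs_mult. apply Rmult_le_compat; try apply Rabs_pos; lra. }
      assert (Hpe : Rabs (p * E s) <= M * Rabs (E s)).
      { rewrite Rabs_mult. apply Rmult_le_compat_r. apply Rabs_pos. exact Hp. }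
      assert (Heta : 0 <= eta) by (unfold eta; apply Rmult_le_pos; [lra| apply Rmult_le_pos; [apply Rabs_pos| lra]]).
      assert (B1 : 2 * E s * (p * E s + q * D s) <= 2 * Rabs (E s) * (M * Rabs (E s) + eta)).
      { apply Rle_trans with (Rabs (2 * E s * (p * E s + q * D s))). apply Rle_abs.
        rewrite !Rabs_mult. rewrite (Rabs_right 2) by lra.
        apply Rmult_le_compat_l. generalize (Rabs_pos (E s)); lra.
        eapply Rle_trans. apply Rabs_triang. lra. }
      assert (B2 : Rabs (E s) * Rabs (E s) = E s * E s) by (rewrite <- Rabs_mult; apply Rabs_right; nra).
      assert (B3 := Rle_0_sqr (Rabs (E s) - eta)). unfold Rsqr in B3.
      assert (B4 : 0 <= M * (eta * eta)) by (apply Rmult_le_pos; [lra| apply Rle_0_sqr]).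
      assert (B5 : 2 * Rabs (E s) * (M * Rabs (E s) + eta) =
                   2 * M * (Rabs (E s) * Rabs (E s)) + 2 * Rabs (E s) * eta) by ring.
      rewrite B2 in B5. lra.
    - apply (continuous_plus (fun s => E (Rmax 0 s) * E (Rmax 0 s)) (fun _ => eta * eta)).
      apply (continuous_mult (fun s => E (Rmax 0 s)) (fun s => E (Rmax 0 s)));
      (unfold E; apply (continuous_minus (fun s => D (Rmax 0 s)) (fun s => h * c (Rmax 0 s)));
       [exact CD0| apply (continuous_scal_r h (fun s => c (Rmax 0 s)));
        apply (continuous_comp (fun s => Rmax 0 s) c); [apply Rmax0_cont| rewrite Rmax_left by lra; exact Hcc]]).
      apply continuous_const. }
  assert (H00 := Rle_0_sqr eta). unfold Rsqr in H00.
  replace ((0 * 0 + eta * eta) * K2) with (eta * eta * K2) in GE by ring.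
  assert (HE2 : E t0 * E t0 <= eta * eta * K2) by lra.
  replace ((X t0 (a + h) - X t0 a) / h - c t0) with (E t0 / h) by (unfold E, D, Xa; field; exact Hh).
  apply sq_lt. exact He.
  assert (Hhh : 0 < h * h) by nra.
  replace (E t0 / h * (E t0 / h)) with ((E t0 * E t0) / (h * h)) by (field; exact Hh).
  apply Rle_lt_trans with (eta * eta * K2 / (h * h)).
  { unfold Rdiv. apply Rmult_le_compat_r. left; apply Rinv_0_lt_compat; exact Hhh. exact HE2. }
  assert (Eh : Rabs h * Rabs h = h * h) by (rewrite <- Rabs_mult; apply Rabs_right; nra).
  replace (eta * eta * K2 / (h * h)) with (e' * e' * (K1 * K1 * K2)) by (unfold eta; rewrite <- Eh; field; lra).
  unfold e'.
  replace (eps / (K1 * K2 + 1) * (eps / (K1 * K2 + 1)) * (K1 * K1 * K2)) with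
    (eps * eps * ((K1 * K1 * K2) / ((K1 * K2 + 1) * (K1 * K2 + 1)))) by (field; nra).
  assert (Hfr : (K1 * K1 * K2) / ((K1 * K2 + 1) * (K1 * K2 + 1)) < 1).
  { apply (Rmult_lt_reg_r ((K1 * K2 + 1) * (K1 * K2 + 1))). nra.
    unfold Rdiv. rewrite Rmult_assoc, Rinv_l by nra. nra. }
  assert (0 < eps * eps) by nra. nra.
Qed.


Lemma CW_ext (T : Rbar) (f g : R -> R -> R) (t x : R) :
  (forall s y, f s y = g s y) -> CW T f t x -> CW T g t x.
Proof.
  intros E H eps He. destruct (H eps He) as [d [Hd Hd']]. exists d; split; [exact Hd|].
  intros s y Hs H1 H2. rewrite <- !E. auto.
Qed.

Lemma fk_cont (z : R) : continuous fk z.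
Proof.
  apply (continuous_ext (fun z => kd z * / sqrt (k z))).
  { intros y. unfold fk. rewrite Derive_k. reflexivity. }
  apply (continuous_mult kd (fun z => / sqrt (k z))). apply kd_cont.
  apply (continuous_Rinv_comp (fun z => sqrt (k z))).
  apply (continuous_comp k sqrt). apply k_cont. apply continuous_sqrt.
  assert (H := k_ge1 z). assert (0 < sqrt (k z)) by (apply sqrt_lt_R0; lra). lra.
Qed.

Section Core.
Variables (T : Rbar) (HT : Rbar_lt 0 T) (sg : R) (Hsg : sg * sg = 1)
  (u v ut ux vt vx : R -> R -> R)
  (Hu : C1_strip T u ut ux) (Hv : C1_strip T v vt vx)
  (Hpu : forall t x, in_time T t -> ut t x + sg * k (sg * (u t x - v t x)) * ux t x = 0)
  (Hpv : forall t x, in_time T t -> vt t x - sg * k (sg * (u t x - v t x)) * vx t x = 0)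
  (Hv0 : forall x, v 0 x = - u 0 x)
  (X : R -> R -> R)
  (HX : forall t a, in_time T t -> is_derive_within (in_time T) (fun s => X s a) t
          (sg * k (sg * (u t (X t a) - v t (X t a)))))
  (HX0 : forall a, X 0 a = a).

Let F := fun s y => sg * k (sg * (u s y - v s y)).
Let Fx := fun s y => kd (sg * (u s y - v s y)) * (ux s y - vx s y).

Lemma core_HF : forall s y, in_time T s -> is_derive (F s) y (Fx s y).
Proof.
  intros s y Hs. unfold F, Fx.
  assert (Du := proj1 (proj2 (Hu s y Hs))). assert (Dv := proj1 (proj2 (Hv s y Hs))).
  assert (Din : is_derive (fun y => sg * (u s y - v s y)) y (sg * (ux s y - vx s y))).
  { apply is_derive_scal. apply (is_derive_minus (u s) (v s)); assumption. }
  eapply isd_eq. apply is_derive_scal. apply (is_derive_comp k (fun y => sg * (u s y - v s y))).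
  apply is_derive_k. exact Din. intros; reflexivity.
  unfold scal; simpl; unfold mult; simpl.
  transitivity ((sg * sg) * kd (sg * (u s y - v s y)) * (ux s y - vx s y)). ring.
  rewrite Hsg. ring.
Qed.

Lemma core_HFx : forall s y, in_time T s -> CW T Fx s y.
Proof.
  intros s y Hs. unfold Fx.
  assert (Cu : CW T u s y) by (eapply C1_CW; eauto).
  assert (Cv : CW T v s y) by (eapply C1_CW; eauto).
  assert (Cux : CW T ux s y) by (apply CW_of; apply (Hu s y Hs)).
  assert (Cvx : CW T vx s y) by (apply CW_of; apply (Hv s y Hs)).
  apply CW_mult.
  - apply (CW_comp T kd (fun s y => sg * (u s y - v s y))).
    + apply CW_scal. eapply CW_ext; [| apply (CW_plus T u (fun s y => -1 * v s y))].
      intros; simpl; ring. exact Cu. apply CW_scal; exact Cv.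
    + apply kd_cont.
  - eapply CW_ext; [| apply (CW_plus T ux (fun s y => -1 * vx s y))].
    intros; simpl; ring. exact Cux. apply CW_scal; exact Cvx.
Qed.

Lemma core_HXd : forall s al, in_time T s -> DW T (fun s => X s al) s (F s (X s al)).
Proof. intros s al Hs. apply DW_of. apply HX. exact Hs. Qed.

Lemma core_A : forall al s, in_time T s -> u s (X s al) = u 0 al.
Proof.
  intros al s Hs.
  assert (Hd : forall s', in_time T s' -> DW T (fun s => u s (X s al)) s'
      (ut s' (X s' al) + ux s' (X s' al) * F s' (X s' al))).
  { intros s' Hs'. apply (chain_DW T u ut ux (fun s => X s al) s'). exact Hu. exact Hs'. apply core_HXd. exact Hs'. }
  rewrite <- (HX0 al) at 2.
  apply (const_lemma (fun s => u s (X s al)) s (proj1 Hs)).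
  - intros s' Hs'.
    assert (Hi : in_time T s') by (split; [lra| apply (Rbar_lt_le_trans' s' s T); [lra| apply Hs]]).
    eapply isd_eq. apply (DW_interior T _ s' _ Hi (proj1 Hs') (Hd s' Hi)). intros; reflexivity.
    unfold F. rewrite <- (Hpu s' (X s' al) Hi). ring.
  - apply (CT_RCe T). exact HT. eapply DW_CT. apply Hd. split. lra. exact HT.
Qed.

Variable a : R.
Let p := fun s => Fx s (X s a).
Let c := fun s => exp (RInt (fun tau => p (Rmax 0 tau)) 0 s).

Lemma core_pCT : forall s, in_time T s -> CT T p s.
Proof.
  intros s Hs. unfold p. apply (CT_curve T Fx (fun s => X s a)).
  apply core_HFx; exact Hs. eapply DW_CT. apply core_HXd; exact Hs.
Qed.

Lemma core_cd : forall s : R, Rbar_lt s T -> is_derive c s (p (Rmax 0 s) * c s).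
Proof.
  intros s Hs. unfold c.
  eapply isd_eq. apply (is_derive_comp exp (fun s => RInt (fun tau => p (Rmax 0 tau)) 0 s)).
  apply is_derive_exp. apply (ftc_clamp T p HT core_pCT s Hs). intros; reflexivity.
  unfold scal; simpl; unfold mult; simpl. reflexivity.
Qed.

Lemma core_diff : forall t0, in_time T t0 -> is_derive (fun al => X t0 al) a (c t0).
Proof.
  apply (diff_dep T HT F Fx X c a).
  - exact core_HF.
  - exact core_HFx.
  - exact core_HXd.
  - exact HX0.
  - unfold c. rewrite RInt_point. apply exp_0.
  - intros s Hs Hp. eapply isd_eq. apply core_cd. apply Hs. intros; reflexivity.
    rewrite Rmax_right by lra. reflexivity.
  - eapply isd_continuous. apply core_cd. exact HT.
Qed.

Lemma core_C : forall s, in_time T s -> ux s (X s a) * c s = ux 0 a.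
Proof.
  intros s Hs.
  assert (D1 : is_derive (fun al => u s (X s al)) a (scal (c s) (ux s (X s a)))).
  { apply (is_derive_comp (u s) (fun al => X s al)). apply (Hu s (X s a) Hs).
    apply core_diff; exact Hs. }
  assert (D2 : is_derive (fun al => u 0 al) a (ux 0 a)).
  { apply (Hu 0 a). split. lra. exact HT. }
  assert (E : forall al, u s (X s al) = u 0 al) by (intros; apply core_A; exact Hs).
  assert (D3 := is_derive_ext _ _ _ _ E D1).
  apply is_derive_unique in D3. apply is_derive_unique in D2.
  assert (D1' : scal (c s) (ux s (X s a)) = ux 0 a) by (rewrite <- D2; rewrite <- D3; reflexivity).
  clear D1. rename D1' into D1.
  rewrite <- D1. unfold scal; simpl; unfold mult; simpl. ring.
Qed.

Lemma core_final : forall t, in_time T t -> is_derive (fun al => X t al) a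
  (sqrt (k (sg * (u 0 a - v t (X t a))) / k (2 * sg * u 0 a)) *
   (1 + ux 0 a * sqrt (k (2 * sg * u 0 a)) *
        RInt (fun tau => fk (sg * (u 0 a - v tau (X tau a)))) 0 t)).
Proof.
  intros t Ht.
  set (eta := fun s => sg * (u 0 a - v s (X s a))).
  assert (HE : forall s, in_time T s -> sg * (u s (X s a) - v s (X s a)) = eta s).
  { intros s Hs. unfold eta. rewrite core_A by exact Hs. reflexivity. }
  assert (Hvd : forall s, in_time T s -> DW T (fun s => v s (X s a)) s
      (vt s (X s a) + vx s (X s a) * F s (X s a))).
  { intros s Hs. apply (chain_DW T v vt vx (fun s => X s a) s); [exact Hv| exact Hs| apply core_HXd; exact Hs]. }
  assert (Hetad : forall s, in_time T s -> 0 < s ->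
      is_derive eta s (-2 * k (eta s) * vx s (X s a))).
  { intros s Hs Hp. unfold eta at 1.
    eapply isd_eq. apply is_derive_scal.
    apply (is_derive_minus (fun _ => u 0 a) (fun s => v s (X s a))).
    apply is_derive_const. apply (DW_interior T _ s _ Hs Hp (Hvd s Hs)).
    intros; reflexivity.
    unfold minus, plus, opp, zero; simpl. unfold F. rewrite (HE s Hs).
    assert (K := Hpv s (X s a) Hs). rewrite (HE s Hs) in K.
    replace (vt s (X s a)) with (sg * k (eta s) * vx s (X s a)) by lra.
    replace (sg * (0 + - (sg * k (eta s) * vx s (X s a) + vx s (X s a) * (sg * k (eta s)))))
      with (-2 * (sg * sg) * k (eta s) * vx s (X s a)) by ring.
    rewrite Hsg. ring. }
  assert (etaCT : forall s, in_time T s -> CT T eta s).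
  { intros s Hs. unfold eta. apply (CT_comp T (fun z => sg * (u 0 a - z)) (fun s => v s (X s a))).
    eapply DW_CT. apply Hvd; exact Hs.
    apply (ex_derive_continuous (fun z => sg * (u 0 a - z))). auto_derive. auto. }
  set (q := fun s => fk (eta s)).
  assert (qCT : forall s, in_time T s -> CT T q s).
  { intros s Hs. unfold q. apply (CT_comp T fk eta). apply etaCT; exact Hs. apply fk_cont. }
  set (I' := fun s => RInt (fun tau => q (Rmax 0 tau)) 0 s).
  assert (Hid : forall s : R, Rbar_lt s T -> is_derive I' s (q (Rmax 0 s))).
  { intros s Hs. apply (ftc_clamp T q HT qCT s Hs). }
  set (S := fun s => sqrt (k (eta s))).
  assert (HSpos : forall s, 0 < S s).
  { intros s. unfold S. apply sqrt_lt_R0. generalize (k_ge1 (eta s)); lra. }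
  assert (HSsq : forall s, S s * S s = k (eta s)).
  { intros s. unfold S. apply sqrt_sqrt. generalize (k_ge1 (eta s)); lra. }
  set (K0 := k (2 * sg * u 0 a)).
  assert (HK0 : 0 < sqrt K0) by (apply sqrt_lt_R0; unfold K0; generalize (k_ge1 (2 * sg * u 0 a)); lra).
  set (w := fun s => c s * / S s - (/ sqrt K0 + ux 0 a * I' s)).
  assert (Hw : w t = w 0).
  { apply (const_lemma w t (proj1 Ht)).
    - intros s Hs.
      assert (Hi : in_time T s) by (split; [lra| apply (Rbar_lt_le_trans' s t T); [lra| apply Ht]]).
      assert (DS : is_derive S s (kd (eta s) * (-2 * k (eta s) * vx s (X s a)) / (2 * S s))).
      { unfold S. eapply isd_eq. apply (is_derive_sqrt (fun s => k (eta s))).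
        apply (is_derive_comp k eta). apply is_derive_k. apply Hetad; [exact Hi| lra].
        generalize (k_ge1 (eta s)); lra. intros; reflexivity.
        unfold scal; simpl; unfold mult; simpl. field. apply Rgt_not_eq, sqrt_lt_R0.
        generalize (k_ge1 (eta s)); lra. }
      assert (DiS := is_derive_inv S s _ DS (Rgt_not_eq _ _ (HSpos s))).
      assert (Dc := core_cd s (proj2 Hi)).
      assert (DI := Hid s (proj2 Hi)).
      eapply isd_eq.
      apply (is_derive_minus (fun s => c s * / S s) (fun s => / sqrt K0 + ux 0 a * I' s)).
      apply (is_derive_mult c (fun s => / S s)). exact Dc. exact DiS. intros; apply Rmult_comm.
      apply (is_derive_plus (fun _ => / sqrt K0) (fun s => ux 0 a * I' s)).
      apply is_derive_const. apply is_derive_scal. exact DI.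
      intros; reflexivity.
      unfold minus, plus, opp, mult, zero; simpl.
      rewrite Rmax_right by lra.
      assert (Hp : p s = kd (eta s) * (ux s (X s a) - vx s (X s a))).
      { unfold p, Fx. rewrite (HE s Hi). reflexivity. }
      assert (Hq : q s = kd (eta s) / S s).
      { unfold q, fk, S. rewrite Derive_k. reflexivity. }
      rewrite Hp, Hq. rewrite <- (core_C s Hi). rewrite <- (HSsq s).
      assert (S s <> 0) by (apply Rgt_not_eq; apply HSpos).
      field. exact H.
    - apply RCe_of.
      apply (continuous_minus (fun s => c (Rmax 0 s) * / S (Rmax 0 s))
                              (fun s => / sqrt K0 + ux 0 a * I' (Rmax 0 s))).
      + apply (continuous_mult (fun s => c (Rmax 0 s)) (fun s => / S (Rmax 0 s))).
        * apply (continuous_comp (fun s => Rmax 0 s) c). apply Rmax0_cont.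
          rewrite Rmax_left by lra. eapply isd_continuous. apply core_cd. exact HT.
        * apply (continuous_Rinv_comp (fun s => S (Rmax 0 s))).
          unfold S. apply (continuous_comp (fun s => eta (Rmax 0 s)) (fun z => sqrt (k z))).
          apply (CT0_clamp T). exact HT. apply etaCT. split; [lra| exact HT].
          apply (continuous_comp k sqrt). apply k_cont. apply continuous_sqrt.
          apply Rgt_not_eq, HSpos.
      + apply (continuous_plus (fun _ => / sqrt K0) (fun s => ux 0 a * I' (Rmax 0 s))).
        apply continuous_const.
        apply (continuous_scal_r (ux 0 a) (fun s => I' (Rmax 0 s))).
        apply (continuous_comp (fun s => Rmax 0 s) I'). apply Rmax0_cont.
        rewrite Rmax_left by lra. eapply isd_continuous. apply Hid. exact HT. }
  assert (Hw0 : w 0 = 0).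
  { unfold w, c, I'. rewrite !RInt_point. unfold zero; simpl. rewrite exp_0.
    assert (E0 : eta 0 = 2 * sg * u 0 a) by (unfold eta; rewrite HX0, Hv0; ring).
    unfold S. rewrite E0. fold K0. field. lra. }
  assert (Hct : c t = S t * (/ sqrt K0 + ux 0 a * I' t)).
  { assert (W : w t = 0) by (rewrite Hw; exact Hw0). unfold w in W.
    assert (S t <> 0) by (apply Rgt_not_eq; apply HSpos).
    assert (H0 : c t = S t * (c t * / S t)) by (field; exact H).
    rewrite H0. f_equal. lra. }
  assert (HI : I' t = RInt (fun tau => fk (sg * (u 0 a - v tau (X tau a)))) 0 t).
  { unfold I'. apply RInt_ext. intros x Hx. rewrite Rmin_left in Hx by apply Ht.
    unfold q. rewrite Rmax_right by lra. reflexivity. }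
  match goal with |- is_derive _ _ ?l => replace l with (c t) end.
  apply core_diff. exact Ht.
  rewrite Hct, HI. fold K0. rewrite sqrt_div_alt.
  2:{ unfold K0. generalize (k_ge1 (2 * sg * u 0 a)); lra. }
  unfold S, eta. field. lra.
Qed.

End Core.

Theorem mainTheorem4
  (w0 : R -> R)
  (Hw0 : C2 w0)
  (Hbdd : exists M, forall x, Rabs (Derive w0 x) <= M)
  (Hnc : exists x y, Derive w0 x <> Derive w0 y)
  (T : Rbar) (HT : Rbar_lt 0 T)
  (r l rt rx lt lx : R -> R -> R)
  (Hr : C1_strip T r rt rx) (Hl : C1_strip T l lt lx)
  (Hpde_r : forall t x, in_time T t -> rt t x + k (r t x - l t x) * rx t x = 0)
  (Hpde_l : forall t x, in_time T t -> lt t x - k (r t x - l t x) * lx t x = 0)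
  (Hinit_r : forall x, r 0 x = r0_of w0 x)
  (Hinit_l : forall x, l 0 x = l0_of w0 x)
  (x1 x2 : R -> R -> R)
  (Hx1 : forall t a, in_time T t ->
     is_derive_within (in_time T) (fun s => x1 s a) t
       (k (r t (x1 t a) - l t (x1 t a))))
  (Hx1_0 : forall a, x1 0 a = a)
  (Hx2 : forall t b, in_time T t ->
     is_derive_within (in_time T) (fun s => x2 s b) t
       (- k (r t (x2 t b) - l t (x2 t b))))
  (Hx2_0 : forall b, x2 0 b = b) :
  forall t a b : R, in_time T t ->
    is_derive (fun a' => x1 t a') a
      (sqrt (k (r0_of w0 a - l t (x1 t a)) / k (2 * r0_of w0 a)) *
       (1 + Derive (r0_of w0) a * sqrt (k (2 * r0_of w0 a)) *
            RInt (fun tau : R => fk (r0_of w0 a - l tau (x1 tau a))) 0 t)) /\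
    is_derive (fun b' => x2 t b') b
      (sqrt (k (r t (x2 t b) - l0_of w0 b) / k (2 * r0_of w0 b)) *
       (1 + Derive (l0_of w0) b * sqrt (k (2 * r0_of w0 b)) *
            RInt (fun tau : R => fk (r tau (x2 tau b) - l0_of w0 b)) 0 t)).
Proof.
  intros t a b Ht.
  assert (HT0 : in_time T 0) by (split; [lra| exact HT]).
  assert (Hrl : forall x, l 0 x = - r 0 x).
  { intros x. rewrite Hinit_r, Hinit_l. unfold r0_of, l0_of. ring. }
  split.
  - assert (H := core_final T HT 1 ltac:(ring) r l rt rx lt lx Hr Hl
       ltac:(intros t' x Ht'; rewrite !Rmult_1_l; apply Hpde_r; exact Ht')
       ltac:(intros t' x Ht'; rewrite !Rmult_1_l; apply Hpde_l; exact Ht')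
       Hrl x1
       ltac:(intros t' a' Ht'; rewrite !Rmult_1_l; apply Hx1; exact Ht')
       Hx1_0 a t Ht).
    assert (RI : RInt (fun tau => fk (1 * (r 0 a - l tau (x1 tau a)))) 0 t =
                 RInt (fun tau => fk (r0_of w0 a - l tau (x1 tau a))) 0 t).
    { apply RInt_ext. intros x _. rewrite Hinit_r, Rmult_1_l. reflexivity. }
    assert (DD : Derive (r0_of w0) a = rx 0 a).
    { rewrite <- (Derive_ext (fun x => r 0 x) (r0_of w0) a Hinit_r).
      apply is_derive_unique. apply (Hr 0 a HT0). }
    rewrite RI in H. rewrite DD. rewrite <- Hinit_r.
    rewrite !Rmult_1_l, Rmult_1_r in H. rewrite <- Hinit_r in H. exact H.
  - assert (H := core_final T HT (-1) ltac:(ring) l r lt lx rt rx Hl Hr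
       ltac:(intros t' x Ht'; replace (-1 * (l t' x - r t' x)) with (r t' x - l t' x) by ring;
             rewrite <- (Hpde_l t' x Ht'); ring)
       ltac:(intros t' x Ht'; replace (-1 * (l t' x - r t' x)) with (r t' x - l t' x) by ring;
             rewrite <- (Hpde_r t' x Ht'); ring)
       ltac:(intros x; rewrite Hrl; ring) x2
       ltac:(intros t' b' Ht'; replace (-1 * k (-1 * (l t' (x2 t' b') - r t' (x2 t' b'))))
               with (- k (r t' (x2 t' b') - l t' (x2 t' b')))
               by (replace (-1 * (l t' (x2 t' b') - r t' (x2 t' b'))) with
                     (r t' (x2 t' b') - l t' (x2 t' b')) by ring; ring);
             apply Hx2; exact Ht')
       Hx2_0 b t Ht).
    assert (RI : RInt (fun tau => fk (-1 * (l 0 b - r tau (x2 tau b)))) 0 t =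
                 RInt (fun tau => fk (r tau (x2 tau b) - l0_of w0 b)) 0 t).
    { apply RInt_ext. intros x _. rewrite Hinit_l. f_equal. ring. }
    assert (DD : Derive (l0_of w0) b = lx 0 b).
    { rewrite <- (Derive_ext (fun x => l 0 x) (l0_of w0) b Hinit_l).
      apply is_derive_unique. apply (Hl 0 b HT0). }
    rewrite RI in H. rewrite DD.
    replace (r t (x2 t b) - l0_of w0 b) with (-1 * (l 0 b - r t (x2 t b)))
      by (rewrite Hinit_l; ring).
    replace (2 * r0_of w0 b) with (2 * -1 * l 0 b) by (rewrite Hinit_l; unfold l0_of, r0_of; ring).
    exact H.
Qed.
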